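(* Let $p>3$ be a prime and let $L_1(x),L_2(x),L_3(x)\in\mathbb{F}_{p^r}[x]$ be additive polynomials. If $A(x)=L_1(x)L_2(x)L_3(x)$ is an Alltop polynomial on $\mathbb{F}_{p^r}$, then $L_1(x),L_2(x),L_3(x)$ are all permutation polynomials of $\mathbb{F}_{p^r}$.
   Context: For $f:\mathbb{F}_{p^r}\to\mathbb{F}_{p^r}$ and $a\in\mathbb{F}_{p^r}$, $\Delta_{f,a}(x)=f(x+a)-f(x)$. A function $f$ is planar if for every $a\in\mathbb{F}_{p^r}^*$ the map $x\mapsto\Delta_{f,a}(x)$ is a bijection; $A$ is an Alltop polynomial if $\Delta_{A,a}$ is planar for every $a\in\mathbb{F}_{p^r}^*$. A polynomial $L$ is additive if $L(x+y)=L(x)+L(y)$ for all $x,y\in\mathbb{F}_{p^r}$. *)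

(* Defs.v *)
From HB Require Import structures.
From mathcomp Require Import all_boot all_order all_algebra all_field.
Set Implicit Arguments. Unset Strict Implicit. Unset Printing Implicit Defensive.
Import GRing.Theory.
Local Open Scope ring_scope.

Definition delta (F : finFieldType) (f : F -> F) (a : F) : F -> F :=
  fun x => f (x + a) - f x.

Definition planar (F : finFieldType) (f : F -> F) : Prop :=
  forall a : F, a != 0 -> bijective (delta f a).

Definition alltop (F : finFieldType) (A : F -> F) : Prop :=
  forall a : F, a != 0 -> planar (delta A a).

Definition additive_poly (F : finFieldType) (L : {poly F}) : Prop :=
  forall x y : F, L.[x + y] = L.[x] + L.[y].

Definition perm_poly (F : finFieldType) (L : {poly F}) : Prop :=
  bijective (fun x : F => L.[x]).

(* Main.v *)
Require Import Defs.
From HB Require Import structures.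
From mathcomp Require Import all_boot all_order all_algebra all_field.
Local Open Scope ring_scope.
Import GRing.Theory.

Lemma key (F : finFieldType) (A : F -> F) (a : F) :
  alltop A -> a != 0 -> A 0 = 0 -> A a = 0 -> A (a + a) = 0 ->
  A (a + a + a) = 0 -> False.
Proof.
move=> H an0 h0 h1 h2 h3.
have /bij_inj inj := H a an0 a an0.
have : delta (delta A a) a 0 = delta (delta A a) a a.
  by rewrite /delta !add0r h0 h1 h2 h3 !subrr.
by move/inj=> /esym /eqP; rewrite (negbTE an0).
Qed.

Lemma add0 (F : finFieldType) (L : {poly F}) : additive_poly L -> L.[0] = 0.
Proof.
move=> H; have := H 0 0; rewrite addr0 => e.
by apply: (addrI L.[0]); rewrite addr0 -e.
Qed.

Lemma inj_of (F : finFieldType) (L : {poly F}) :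
  additive_poly L -> (forall a, L.[a] = 0 -> a = 0) -> perm_poly L.
Proof.
move=> H K; apply: injF_bij => x y /= e.
have : L.[x - y] = 0.
  have := H (x - y) y; rewrite subrK e => e'.
  by apply: (addIr L.[y]); rewrite add0r -e'.
by move/K/eqP; rewrite subr_eq0 => /eqP.
Qed.

Theorem theorem3 (p : nat) (F : finFieldType) (L1 L2 L3 : {poly F}) :
  prime p -> (3 < p)%N -> p \in [pchar F] ->
  additive_poly L1 -> additive_poly L2 -> additive_poly L3 ->
  alltop (fun x : F => (L1 * L2 * L3).[x]) ->
  [/\ perm_poly L1, perm_poly L2 & perm_poly L3].
Proof.
move=> _ _ _ H1 H2 H3 HA.
have Z : forall L : {poly F}, additive_poly L -> forall a, L.[a] = 0 ->
   [/\ L.[0] = 0, L.[a + a] = 0 & L.[a + a + a] = 0].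
  move=> L H a e; split; first exact: add0.
    by rewrite H e addr0.
  by rewrite H H e !addr0.
have T : forall a : F, a != 0 -> (L1 * L2 * L3).[0] = 0 -> (L1 * L2 * L3).[a] = 0 ->
   (L1 * L2 * L3).[a + a] = 0 -> (L1 * L2 * L3).[a + a + a] = 0 -> False.
  by move=> a an0; move=> h0 h1 h2 h3; exact: (@key F (fun x => (L1 * L2 * L3).[x]) a HA an0 h0 h1 h2 h3).
split; apply: inj_of => // a e; apply/eqP; apply/negP => /negP an0.
- have [e0 e2 e3] := Z _ H1 a e.
  by apply: (T a an0); rewrite !hornerM ?e0 ?e ?e2 ?e3 !(mulr0, mul0r).
- have [e0 e2 e3] := Z _ H2 a e.
  by apply: (T a an0); rewrite !hornerM ?e0 ?e ?e2 ?e3 !(mulr0, mul0r).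
- have [e0 e2 e3] := Z _ H3 a e.
  by apply: (T a an0); rewrite !hornerM ?e0 ?e ?e2 ?e3 !(mulr0, mul0r).
Qed.
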